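(* Fix integers $Q_1,Q_2\ge0$. Consider a single realization of the demand stream: a Poisson process of type-1 arrivals (rate $\lambda_1$) and an independent Poisson process of type-2 arrivals (rate $\lambda_2$), each type-$i$ arrival carrying an independent mark equal to $1$ with probability $p_{ij}$ ($j\ne i$) and $0$ otherwise. Run four inventory systems driven by this same stream, with initial stocks $(Q_1+1,Q_2+1)$, $(Q_1+1,Q_2)$, $(Q_1,Q_2+1)$, $(Q_1,Q_2)$, and denote their stock of product $i$ at time $t$ by $n_i^{(Q_1+1,Q_2+1)}(t)$, $n_i^{(Q_1+1,Q_2)}(t)$, $n_i^{(Q_1,Q_2+1)}(t)$, $n_i^{(Q_1,Q_2)}(t)$ respectively. Then for every $t\ge0$ and $i=1,2$, on every sample path, $$n_i^{(Q_1+1,Q_2+1)}(t)-n_i^{(Q_1+1,Q_2)}(t)\ \ge\ n_i^{(Q_1,Q_2+1)}(t)-n_i^{(Q_1,Q_2)}(t).$$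
   Context: Dynamics of one inventory system driven by the arrival stream: at a type-$i$ arrival (with $j\ne i$ the other product), if the stock of product $i$ is positive it decreases by one; otherwise, if the stock of product $j$ is positive and the arrival's mark is $1$, the stock of $j$ decreases by one; otherwise nothing changes. There is no replenishment. Under this construction each system's stock process is the inventory CTMC with rates $\lambda_1,\lambda_2$ in the interior, $\lambda_1+\lambda_2p_{21}$ on $\{(i_1,0)\}$, $\lambda_2+\lambda_1p_{12}$ on $\{(0,i_2)\}$, and $(0,0)$ absorbing. *)

(* Defs.v *)
From HB Require Import structures.
From mathcomp Require Import all_boot all_order all_algebra.
Set Implicit Arguments. Unset Strict Implicit. Unset Printing Implicit Defensive.
Import Order.TTheory GRing.Theory Num.Theory.

(* Products are indexed by bool: [false] = product 1, [true] = product 2.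
   A state is the pair of stock levels (n_1, n_2). *)
Definition stock (x : nat * nat) (i : bool) : nat := if i then x.2 else x.1.

Definition dec (x : nat * nat) (i : bool) : nat * nat :=
  if i then (x.1, x.2.-1) else (x.1.-1, x.2).

(* An arrival is (type i, mark m). *)
Definition step (x : nat * nat) (a : bool * bool) : nat * nat :=
  let: (i, m) := a in
  if 0 < stock x i then dec x i
  else if (0 < stock x (~~ i)) && m then dec x (~~ i) else x.

(* A sample path of the demand stream: the chronological list of arrivals
   (arrival time, (type, mark)).  Stock at time t starting from x0: apply the
   arrivals with arrival time <= t, in order. *)
Definition stock_at (R : realFieldType) (path : seq (R * (bool * bool)))
    (x0 : nat * nat) (t : R) : nat * nat :=
  foldl step x0 [seq e.2 | e <- path & (e.1 <= t)%R].

(* Main.v *)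
Require Import Defs.
From HB Require Import structures.
From mathcomp Require Import all_boot all_order all_algebra.
From mathcomp Require Import zify.
Import Order.TTheory GRing.Theory Num.Theory.
Local Open Scope ring_scope.

Definition inv4 (A B C D : nat * nat) : Prop :=
  let: (d1, d2) := D in
  (A = D /\ B = D /\ C = D) \/
  (D = (0,0)%N /\ A = (0,1)%N /\ B = D /\ C = D) \/
  (d1 = 0%N /\ A = (0, d2.+1)%N /\ B = D /\ C = (0, d2.+1)%N) \/
  (d1 = 0%N /\ A = (0, d2.+2)%N /\ B = (0, d2.+1)%N /\ C = (0, d2.+1)%N) \/
  (D = (0,0)%N /\ A = (1,0)%N /\ B = D /\ C = D) \/
  (d2 = 0%N /\ A = (d1.+1, 0)%N /\ B = (d1.+1, 0)%N /\ C = D) \/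
  (A = (d1.+1, d2.+1) /\ B = (d1.+1, d2) /\ C = (d1, d2.+1)) \/
  (d2 = 0%N /\ A = (d1.+2, 0)%N /\ B = (d1.+1, 0)%N /\ C = (d1.+1, 0)%N).

Ltac pick := first [ left; solve [intuition auto] | right; pick | solve [intuition auto] ].

Lemma inv4_step A B C D a : inv4 A B C D ->
  inv4 (step A a) (step B a) (step C a) (step D a).
Proof.
case: D => d1 d2 /=.
move=> H; case: a => [[] []];
decompose [or and] H; clear H;
repeat match goal with h : (_,_) = (_,_) |- _ => case: h => ?? end;
subst;
try (destruct d1 as [|[|k1]]); try (destruct d2 as [|[|k2]]);
rewrite /step /= ; pick.
Qed.

Lemma inv4_fold s A B C D : inv4 A B C D ->
  inv4 (foldl step A s) (foldl step B s) (foldl step C s) (foldl step D s).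
Proof.
elim: s A B C D => //= a s IH A B C D H; apply: IH; exact: inv4_step.
Qed.

Theorem mainTheorem4 (R : realFieldType) (Q1 Q2 : nat)
    (path : seq (R * (bool * bool)))
    (hpos : all (fun e => 0 <= e.1) path)
    (hsorted : sorted (fun e f => e.1 <= f.1) path)
    (t : R) (ht : 0 <= t) (i : bool) :
  (stock (stock_at path (Q1.+1, Q2.+1) t) i)%:Z
    - (stock (stock_at path (Q1.+1, Q2) t) i)%:Z
  >= (stock (stock_at path (Q1, Q2.+1) t) i)%:Z
    - (stock (stock_at path (Q1, Q2) t) i)%:Z.
Proof.
have H : inv4 (Q1.+1, Q2.+1) (Q1.+1, Q2) (Q1, Q2.+1) (Q1, Q2).
  by rewrite /=; right; right; right; right; right; right; left.
have := @inv4_fold [seq e.2 | e <- path & (e.1 <= t)%R] _ _ _ _ H.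
rewrite /stock_at.
move: (foldl step (Q1.+1, Q2.+1) _) (foldl step (Q1.+1, Q2) _) (foldl step (Q1, Q2.+1) _) (foldl step (Q1, Q2) _).
move=> [a1 a2] [b1 b2] [c1 c2] [d1 d2] /=.
move=> H'; decompose [or and] H'; clear H';
repeat match goal with h : (_,_) = (_,_) |- _ => case: h => ?? end;
subst; case: i; rewrite /stock /=; lia.
Qed.
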